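(* (Normal form partial resolution subformula property.) For any $\mathsf{GT}^-$-derivation $\mathcal{D}$ of a sequent $\Gamma\Rightarrow\Delta$ that is in normal form, each formula occurring in $\mathcal{D}$ is a partial resolution of some formula occurring in $\Gamma,\Delta$ or a subformula of a resolution of some formula occurring in $\Gamma,\Delta$.
   Context: Fix a countably infinite set $\mathsf{Prop}$ of propositional variables. Classical formulas are generated by $\alpha ::= p \mid \bot \mid \neg\alpha \mid \alpha\wedge\alpha \mid \alpha\vee\alpha$ with $p\in\mathsf{Prop}$. Formulas are generated by $\phi ::= \alpha \mid \phi\wedge\phi \mid \phi\vee\phi \mid \phi\mathbin{\backslash\!\!/}\phi$ where $\alpha$ is classical ($\vee$: split disjunction, $\mathbin{\backslash\!\!/}$: inquisitive disjunction). A sequent is $\Gamma\Rightarrow\Delta$ with $\Gamma,\Delta$ finite multisets of formulas; ''$\Gamma,\Delta$'' is multiset union. Resolutions: $\mathcal{R}(p)=\{p\}$, $\mathcal{R}(\bot)=\{\bot\}$, $\mathcal{R}(\neg\alpha)=\{\neg\beta:\beta\in\mathcal{R}(\alpha)\}$, $\mathcal{R}(\phi\wedge\psi)=\{\alpha\wedge\beta:\alpha\in\mathcal{R}(\phi),\beta\in\mathcal{R}(\psi)\}$, $\mathcal{R}(\phi\vee\psi)=\{\alpha\vee\beta:\alpha\in\mathcal{R}(\phi),\beta\in\mathcal{R}(\psi)\}$, $\mathcal{R}(\phi\mathbin{\backslash\!\!/}\psi)=\mathcal{R}(\phi)\cup\mathcal{R}(\psi)$. For a multiset $\Gamma$, $\mathcal{R}(\Gamma)$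 is the set of multisets $g[\Gamma]$ where $g$ assigns to each element (occurrence) $\phi$ of $\Gamma$ some $g(\phi)\in\mathcal{R}(\phi)$. Partial resolutions: a partial resolution of a formula $\phi$ is any formula obtained from $\phi$ by a finite (possibly empty) sequence of steps, each of which replaces one occurrence of a subformula of the form $\psi_L\mathbin{\backslash\!\!/}\psi_R$ in the current formula by $\psi_L$ or by $\psi_R$. Deep-inference notation: for a formula $\chi$ with a designated occurrence of a subformula not in the scope of any negation, $\chi\{\eta\}$ denotes the result of replacing that occurrence by $\eta$. The cut-free calculus $\mathsf{GT}^-$ ($\alpha$ ranges over classical formulas, $\Lambda$ over multisets of classical formulas): axioms $\Gamma,p\Rightarrow p,\Delta$ and $\Gamma,\bot\Rightarrow\Delta$; (L$\neg$) from $\Gamma\Rightarrow\alpha,\Delta$ infer $\Gamma,\neg\alpha\Rightarrow\Delta$; (R$\neg$) from $\Gamma,\alpha\Rightarrow\Delta$ infer $\Gamma\Rightarrow\neg\alpha,\Delta$; (L$\wedge$) from $\Gamma,\phi,\psi\Rightarrow\Delta$ infer $\Gamma,\phi\wedge\psi\Rightarrow\Delta$; (R$\wedge$) from $\Gamma\Rightarrow\phi,\Lambda$ and $\Gamma\Rightarrow\psi,\Lambda$ infer $\Gamma\Rightarrow\phi\wedge\psi,\Lambda,\Delta$; (L$\vee$) from $\Gamma,\phi\Rightarrow\Lambda$ and $\Gamma,\psi\Rightarrow\Lambda$ infer $\Gamma,\phi\vee\psi\Rightarrow\Lambda,\Delta$; (R$\vee$) from $\Gamma\Rightarrow\phi,\psi,\Delta$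 infer $\Gamma\Rightarrow\phi\vee\psi,\Delta$; (L$\mathbin{\backslash\!\!/}$) from $\Gamma,\chi\{\phi_L\}\Rightarrow\Delta$ and $\Gamma,\chi\{\phi_R\}\Rightarrow\Delta$ infer $\Gamma,\chi\{\phi_L\mathbin{\backslash\!\!/}\phi_R\}\Rightarrow\Delta$; (R$\mathbin{\backslash\!\!/}$) from $\Gamma\Rightarrow\chi\{\phi_i\},\Delta$ ($i\in\{L,R\}$) infer $\Gamma\Rightarrow\chi\{\phi_L\mathbin{\backslash\!\!/}\phi_R\},\Delta$. $\mathsf{G3cp}^-$ is $\mathsf{GT}^-$ without (L$\mathbin{\backslash\!\!/}$) and (R$\mathbin{\backslash\!\!/}$). Normal form: a $\mathsf{GT}^-$-derivation of $\Gamma\Rightarrow\Delta$ is in normal form if, for some $f:\mathcal{R}(\Gamma)\to\mathcal{R}(\Delta)$, it consists of $\mathsf{G3cp}^-$-derivations of $\Xi\Rightarrow f(\Xi)$ for each $\Xi\in\mathcal{R}(\Gamma)$, extended using only (R$\mathbin{\backslash\!\!/}$) to derivations of $\Xi\Rightarrow\Delta$ for each $\Xi\in\mathcal{R}(\Gamma)$, which are then combined using only (L$\mathbin{\backslash\!\!/}$) into a derivation of $\Gamma\Rightarrow\Delta$. *)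

(* Defs.v *)
From Stdlib Require Import List Permutation Relations.
Import ListNotations.

Inductive form : Type :=
| Var : nat -> form
| Bot : form
| Neg : form -> form
| And : form -> form -> form
| Or  : form -> form -> form    (* split disjunction *)
| Ior : form -> form -> form.   (* inquisitive disjunction *)

Fixpoint classical (a : form) : Prop :=
  match a with
  | Var _ | Bot => True
  | Neg a => classical a
  | And a b | Or a b => classical a /\ classical b
  | Ior _ _ => False
  end.

Fixpoint wf (f : form) : Prop :=
  match f with
  | Var _ | Bot => True
  | Neg a => classical a
  | And a b | Or a b | Ior a b => wf a /\ wf b
  end.

Inductive is_res : form -> form -> Prop :=
| res_var p : is_res (Var p) (Var p)
| res_bot : is_res Bot Bot
| res_neg a b : is_res a b -> is_res (Neg a) (Neg b)
| res_and a b a' b' : is_res a a' -> is_res b b' -> is_res (And a b) (And a' b')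
| res_or a b a' b' : is_res a a' -> is_res b b' -> is_res (Or a b) (Or a' b')
| res_iorL a b c : is_res a c -> is_res (Ior a b) c
| res_iorR a b c : is_res b c -> is_res (Ior a b) c.

(* Multisets are lists up to permutation. Xi \in R(Gamma): *)
Definition inR (G X : list form) : Prop :=
  exists X', Forall2 is_res G X' /\ Permutation X' X.

Inductive pr_step : form -> form -> Prop :=
| prs_L a b : pr_step (Ior a b) a
| prs_R a b : pr_step (Ior a b) b
| prs_neg a a' : pr_step a a' -> pr_step (Neg a) (Neg a')
| prs_andl a a' b : pr_step a a' -> pr_step (And a b) (And a' b)
| prs_andr a b b' : pr_step b b' -> pr_step (And a b) (And a b')
| prs_orl a a' b : pr_step a a' -> pr_step (Or a b) (Or a' b)
| prs_orr a b b' : pr_step b b' -> pr_step (Or a b) (Or a b')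
| prs_iorl a a' b : pr_step a a' -> pr_step (Ior a b) (Ior a' b)
| prs_iorr a b b' : pr_step b b' -> pr_step (Ior a b) (Ior a b').

Definition partial_res : form -> form -> Prop := clos_refl_trans form pr_step.

Inductive subformula (psi : form) : form -> Prop :=
| sub_refl : subformula psi psi
| sub_neg a : subformula psi a -> subformula psi (Neg a)
| sub_andl a b : subformula psi a -> subformula psi (And a b)
| sub_andr a b : subformula psi b -> subformula psi (And a b)
| sub_orl a b : subformula psi a -> subformula psi (Or a b)
| sub_orr a b : subformula psi b -> subformula psi (Or a b)
| sub_iorl a b : subformula psi a -> subformula psi (Ior a b)
| sub_iorr a b : subformula psi b -> subformula psi (Ior a b).

(* Deep-inference contexts chi{ } : a hole not in the scope of a negation *)
Inductive ctx : Type :=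
| Hole : ctx
| CAndL : ctx -> form -> ctx
| CAndR : form -> ctx -> ctx
| COrL : ctx -> form -> ctx
| COrR : form -> ctx -> ctx
| CIorL : ctx -> form -> ctx
| CIorR : form -> ctx -> ctx.

Fixpoint plug (c : ctx) (e : form) : form :=
  match c with
  | Hole => e
  | CAndL c b => And (plug c e) b
  | CAndR a c => And a (plug c e)
  | COrL c b => Or (plug c e) b
  | COrR a c => Or a (plug c e)
  | CIorL c b => Ior (plug c e) b
  | CIorR a c => Ior a (plug c e)
  end.

(* sequents: (antecedent, succedent), each a multiset given as a list *)
Definition sequent : Type := (list form * list form)%type.

Definition seq_perm (s t : sequent) : Prop :=
  Permutation (fst s) (fst t) /\ Permutation (snd s) (snd t).

Inductive rule : Type :=
| AxP | AxBot | LNeg | RNeg | LAnd | RAnd | LOr | ROr | LIor | RIor.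

(* rule instances with a fixed list representation of the multisets *)
Inductive step_exact : rule -> list sequent -> sequent -> Prop :=
| se_axp G D p : step_exact AxP [] (Var p :: G, Var p :: D)
| se_axbot G D : step_exact AxBot [] (Bot :: G, D)
| se_lneg G D a : classical a ->
    step_exact LNeg [(G, a :: D)] (Neg a :: G, D)
| se_rneg G D a : classical a ->
    step_exact RNeg [(a :: G, D)] (G, Neg a :: D)
| se_land G D f g :
    step_exact LAnd [(f :: g :: G, D)] (And f g :: G, D)
| se_rand G L D f g : Forall classical L ->
    step_exact RAnd [(G, f :: L); (G, g :: L)] (G, And f g :: L ++ D)
| se_lor G L D f g : Forall classical L ->
    step_exact LOr [(f :: G, L); (g :: G, L)] (Or f g :: G, L ++ D)
| se_ror G D f g :
    step_exact ROr [(G, f :: g :: D)] (G, Or f g :: D)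
| se_lior G D c fL fR :
    step_exact LIor [(plug c fL :: G, D); (plug c fR :: G, D)]
                    (plug c (Ior fL fR) :: G, D)
| se_riorL G D c fL fR :
    step_exact RIor [(G, plug c fL :: D)] (G, plug c (Ior fL fR) :: D)
| se_riorR G D c fL fR :
    step_exact RIor [(G, plug c fR :: D)] (G, plug c (Ior fL fR) :: D).

Definition step (r : rule) (prems : list sequent) (concl : sequent) : Prop :=
  exists prems' concl',
    Forall2 seq_perm prems prems' /\ seq_perm concl concl' /\
    step_exact r prems' concl'.

Inductive deriv : Type :=
| dnode : rule -> sequent -> list deriv -> deriv.

Definition dconcl (d : deriv) : sequent := match d with dnode _ s _ => s end.
Definition drule (d : deriv) : rule := match d with dnode r _ _ => r end.

Inductive valid (allowed : rule -> Prop) : deriv -> Prop :=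
| vnode r s ds : allowed r -> step r (map dconcl ds) s ->
    Forall (valid allowed) ds -> valid allowed (dnode r s ds).

Definition GT_rules (r : rule) : Prop := True.
Definition G3cp_rules (r : rule) : Prop := r <> LIor /\ r <> RIor.

Definition GT_derivation (d : deriv) (G D : list form) : Prop :=
  valid GT_rules d /\ dconcl d = (G, D).

Inductive rstage (Xi Th : list form) : deriv -> Prop :=
| rs_base d : valid G3cp_rules d -> seq_perm (dconcl d) (Xi, Th) ->
    rstage Xi Th d
| rs_step s d : step RIor [dconcl d] s -> rstage Xi Th d ->
    rstage Xi Th (dnode RIor s [d]).

Inductive lstage (P : deriv -> Prop) : deriv -> Prop :=
| ls_base d : P d -> lstage P d
| ls_step s d1 d2 : step LIor [dconcl d1; dconcl d2] s ->
    lstage P d1 -> lstage P d2 -> lstage P (dnode LIor s [d1; d2]).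

(* lleaf d' d : d' is one of the subderivations combined by the (L\\/)
   part at the bottom of d *)
Inductive lleaf : deriv -> deriv -> Prop :=
| ll_base r s ds : r <> LIor -> lleaf (dnode r s ds) (dnode r s ds)
| ll_sub s ds d d' : In d ds -> lleaf d' d -> lleaf d' (dnode LIor s ds).

Definition normal_form (d : deriv) (G D : list form) : Prop :=
  exists f : list form -> list form,
    (* f is a function on multisets, R(G) -> R(D) *)
    (forall X Y, Permutation X Y -> Permutation (f X) (f Y)) /\
    (forall X, inR G X -> inR D (f X)) /\
    (* the derivation is combined by (L\\/) from derivations of Xi => D,
       Xi in R(G), each being a G3cp^- derivation of Xi => f(Xi)
       extended using only (R\\/) *)
    lstage (fun d' => exists X, inR G X /\ seq_perm (dconcl d') (X, D) /\
                                rstage X (f X) d') d /\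
    (* there is such a component for each Xi in R(G) *)
    (forall X, inR G X ->
       exists d', lleaf d' d /\ Permutation (fst (dconcl d')) X).

Inductive occurs (phi : form) : deriv -> Prop :=
| occ_here r s ds : In phi (fst s ++ snd s) -> occurs phi (dnode r s ds)
| occ_sub r s ds d : In d ds -> occurs phi d -> occurs phi (dnode r s ds).

(* Main.v *)
Require Import Defs.
From Stdlib Require Import List Permutation Relations.
Import ListNotations.

Fixpoint deriv_ind' (P : deriv -> Prop)
  (H : forall r s ds, Forall P ds -> P (dnode r s ds)) (d : deriv) : P d :=
  match d with
  | dnode r s ds => H r s ds
      ((fix go (l : list deriv) : Forall P l :=
          match l with
          | [] => Forall_nil _
          | x :: l' => Forall_cons _ (deriv_ind' P H x) (go l')
          end) ds)
  end.

Definition fs (s : sequent) := fst s ++ snd s.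

Lemma seq_perm_in s t phi : seq_perm s t -> In phi (fs t) -> In phi (fs s).
Proof.
  intros [H1 H2] Hi. unfold fs in *.
  eapply Permutation_in; [|exact Hi].
  apply Permutation_sym, Permutation_app; assumption.
Qed.

Lemma forall2_in {A B} (R : A -> B -> Prop) l1 l2 y :
  Forall2 R l1 l2 -> In y l2 -> exists x, In x l1 /\ R x y.
Proof.
  induction 1; simpl; [tauto|]. intros [->|Hi].
  - exists x; auto.
  - destruct (IHForall2 Hi) as [z [? ?]]; exists z; auto.
Qed.

Lemma subformula_trans a b c : subformula a b -> subformula b c -> subformula a c.
Proof. intros H1 H2; induction H2; [exact H1|..]; eauto using subformula. Qed.

Lemma res_classical a b : is_res a b -> classical b.
Proof. induction 1; simpl; auto. Qed.

Lemma sub_classical a b : subformula a b -> classical b -> classical a.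
Proof. induction 1; simpl; intuition. Qed.

Lemma prs_not_classical a b : pr_step a b -> classical a -> False.
Proof. induction 1; simpl; intuition. Qed.

Lemma plug_step c a b : pr_step (plug c (Ior a b)) (plug c a).
Proof. induction c; simpl; constructor; auto. Qed.
Lemma plug_stepR c a b : pr_step (plug c (Ior a b)) (plug c b).
Proof. induction c; simpl; constructor; auto. Qed.

Lemma step_exact_sub r ps s : G3cp_rules r -> step_exact r ps s ->
  forall p, In p ps -> forall phi, In phi (fs p) ->
  exists phi', In phi' (fs s) /\ subformula phi phi'.
Proof.
  intros Hr He p Hp phi Hphi. unfold fs in *.
  destruct He; simpl in *;
    try (destruct Hr as [H1 H2]; exfalso; auto; fail);
    repeat match goal with
    | H : _ \/ _ |- _ => destruct H
    | H : False |- _ => contradiction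
    | H : _ = p |- _ => subst p
    end; simpl in *;
    repeat (rewrite in_app_iff in * ); simpl in *;
    repeat match goal with
    | H : _ \/ _ |- _ => destruct H
    | H : _ = phi |- _ => subst phi
    end;
    eauto 8 using sub_refl, sub_neg, sub_andl, sub_andr, sub_orl, sub_orr,
      in_or_app, in_eq, in_cons.
Qed.

Lemma step_sub r ps s : G3cp_rules r -> step r ps s ->
  forall p, In p ps -> forall phi, In phi (fs p) ->
  exists phi', In phi' (fs s) /\ subformula phi phi'.
Proof.
  intros Hr [ps' [s' [HF [Hs He]]]] p Hp phi Hphi.
  assert (exists p', In p' ps' /\ seq_perm p p') as [p' [Hp' Hpp]].
  { clear - HF Hp. induction HF; simpl in *; [tauto|].
    destruct Hp as [->|Hp]; eauto.
    destruct (IHHF Hp) as [q [? ?]]; eauto. }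
  assert (In phi (fs p')).
  { destruct Hpp as [H1 H2]; unfold fs in *.
    eapply Permutation_in; [|exact Hphi]. apply Permutation_app; auto. }
  destruct (step_exact_sub _ _ _ Hr He p' Hp' phi H) as [q [Hq Hs']].
  exists q; split; auto. eapply seq_perm_in; eauto.
Qed.

Lemma step_exact_pr r ps s : (r = LIor \/ r = RIor) -> step_exact r ps s ->
  forall p, In p ps -> forall phi, In phi (fs p) ->
  exists phi', In phi' (fs s) /\ (phi' = phi \/ pr_step phi' phi).
Proof.
  intros Hr He p Hp phi Hphi. unfold fs in *.
  destruct He; simpl in *;
    try (destruct Hr as [H1|H1]; discriminate);
    repeat match goal with
    | H : _ \/ _ |- _ => destruct H
    | H : False |- _ => contradiction
    | H : _ = p |- _ => subst p
    end; simpl in *;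
    repeat (rewrite in_app_iff in * ); simpl in *;
    repeat match goal with
    | H : _ \/ _ |- _ => destruct H
    | H : _ = phi |- _ => subst phi
    end;
    eauto 8 using plug_step, plug_stepR, in_or_app, in_eq, in_cons.
Qed.

Lemma step_pr r ps s : (r = LIor \/ r = RIor) -> step r ps s ->
  forall p, In p ps -> forall phi, In phi (fs p) ->
  exists phi', In phi' (fs s) /\ (phi' = phi \/ pr_step phi' phi).
Proof.
  intros Hr [ps' [s' [HF [Hs He]]]] p Hp phi Hphi.
  assert (exists p', In p' ps' /\ seq_perm p p') as [p' [Hp' Hpp]].
  { clear - HF Hp. induction HF; simpl in *; [tauto|].
    destruct Hp as [->|Hp]; eauto.
    destruct (IHHF Hp) as [q [? ?]]; eauto. }
  assert (In phi (fs p')).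
  { destruct Hpp as [H1 H2]; unfold fs in *.
    eapply Permutation_in; [|exact Hphi]. apply Permutation_app; auto. }
  destruct (step_exact_pr _ _ _ Hr He p' Hp' phi H) as [q [Hq Hs']].
  exists q; split; auto. eapply seq_perm_in; eauto.
Qed.

Lemma lemA (Q : form -> Prop) :
  (forall a b, Q b -> subformula a b -> Q a) ->
  forall d, valid G3cp_rules d -> (forall phi, In phi (fs (dconcl d)) -> Q phi) ->
  forall phi, occurs phi d -> Q phi.
Proof.
  intros HQc d. induction d using deriv_ind'.
  intros Hv HQ phi Hocc. inversion Hv; subst.
  inversion Hocc; subst.
  - apply HQ; exact H1.
  - rewrite Forall_forall in H, H5.
    apply (H d H2 (H5 d H2)); auto.
    intros psi Hpsi.
    destruct (step_sub _ _ _ H3 H4 (dconcl d) (in_map _ _ _ H2) psi Hpsi)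
      as [q [Hq Hsq]].
    eapply HQc; [apply HQ; exact Hq| exact Hsq].
Qed.

Section Main.
Variables G D : list form.

Definition Good2 phi := exists psi, In psi (G ++ D) /\
   exists alpha, is_res psi alpha /\ subformula phi alpha.
Definition Good phi := exists psi, In psi (G ++ D) /\
      (partial_res psi phi \/ exists alpha, is_res psi alpha /\ subformula phi alpha).

Lemma good2_good phi : Good2 phi -> Good phi.
Proof. intros [psi [? ?]]; exists psi; auto. Qed.

Lemma good2_sub a b : Good2 b -> subformula a b -> Good2 a.
Proof.
  intros [psi [? [al [? ?]]]] ?. exists psi; split; auto.
  exists al; split; auto. eapply subformula_trans; eauto.
Qed.

Lemma good_pr a b : Good a -> pr_step a b -> Good b.
Proof.
  intros [psi [Hin [Hp|[al [Hr Hs]]]]] Hst.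
  - exists psi; split; auto. left. eapply rt_trans; [exact Hp| apply rt_step; exact Hst].
  - exfalso. eapply prs_not_classical; [exact Hst|].
    eapply sub_classical; [exact Hs|]. eapply res_classical; eauto.
Qed.

Lemma good_step r p s : (r = LIor \/ r = RIor) -> step r [p] s ->
  (forall phi, In phi (fs s) -> Good phi) -> forall phi, In phi (fs p) -> Good phi.
Proof.
  intros Hr Hs HG phi Hphi.
  destruct (step_pr _ _ _ Hr Hs p (in_eq _ _) phi Hphi) as [q [Hq [<-|Hpr]]]; auto.
  eapply good_pr; eauto.
Qed.

Lemma lemB X Th d : rstage X Th d ->
  (forall phi, In phi (X ++ Th) -> Good2 phi) ->
  (forall phi, In phi (fs (dconcl d)) -> Good phi) ->
  forall phi, occurs phi d -> Good phi.
Proof.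
  induction 1; intros HX HG phi Hocc.
  - apply good2_good. eapply lemA; eauto. apply good2_sub.
    intros psi Hpsi. apply HX. apply (seq_perm_in _ _ _ (conj (Permutation_sym (proj1 H0)) (Permutation_sym (proj2 H0)))).
    exact Hpsi.
  - inversion Hocc; subst.
    + apply HG; assumption.
    + match goal with H : In _ [_] |- _ => destruct H as [<-|[]] end. apply IHrstage; auto.
      eapply good_step; eauto.
Qed.

Lemma lemD (P : deriv -> Prop) d : lstage P d ->
  (forall d', P d' -> (forall phi, In phi (fs (dconcl d')) -> Good phi) ->
      forall phi, occurs phi d' -> Good phi) ->
  (forall phi, In phi (fs (dconcl d)) -> Good phi) ->
  forall phi, occurs phi d -> Good phi.
Proof.
  induction 1; intros HP HG phi Hocc.
  - eapply HP; eauto.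
  - inversion Hocc; subst.
    + apply HG; assumption.
    + match goal with H : In _ [_; _] |- _ => simpl in H; rename H into H3 end.
      destruct H3 as [<-|[<-|[]]].
      * apply IHlstage1; auto. intros psi Hpsi.
        destruct (step_pr _ _ _ (or_introl eq_refl) H (dconcl d1) (in_eq _ _) psi Hpsi)
          as [q [Hq [<-|Hpr]]]; auto. eapply good_pr; eauto.
      * apply IHlstage2; auto. intros psi Hpsi.
        destruct (step_pr _ _ _ (or_introl eq_refl) H (dconcl d2) (in_cons _ _ _ (in_eq _ _)) psi Hpsi)
          as [q [Hq [<-|Hpr]]]; auto. eapply good_pr; eauto.
Qed.

Lemma inR_good2_l X : inR G X -> forall x, In x X -> Good2 x.
Proof.
  intros [X' [HF HP]] x Hx.
  destruct (forall2_in _ _ _ x HF) as [g [Hg Hr]].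
  { eapply Permutation_in; [apply Permutation_sym; exact HP| exact Hx]. }
  exists g; split; [apply in_or_app; auto|]. exists x; split; auto. constructor.
Qed.

Lemma inR_good2_r X : inR D X -> forall x, In x X -> Good2 x.
Proof.
  intros [X' [HF HP]] x Hx.
  destruct (forall2_in _ _ _ x HF) as [g [Hg Hr]].
  { eapply Permutation_in; [apply Permutation_sym; exact HP| exact Hx]. }
  exists g; split; [apply in_or_app; auto|]. exists x; split; auto. constructor.
Qed.

End Main.

Theorem proposition7p3 (G D : list form) (d : deriv) :
  Forall wf G -> Forall wf D ->
  GT_derivation d G D ->
  normal_form d G D ->
  forall phi, occurs phi d ->
    exists psi, In psi (G ++ D) /\
      (partial_res psi phi \/ exists alpha, is_res psi alpha /\ subformula phi alpha).
Proof.
  intros _ _ [_ Hc] [f [_ [Hf [Hl _]]]] phi Hocc.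
  change (Good G D phi).
  eapply lemD; [exact Hl| | |exact Hocc].
  - intros d' [X [HX [Hp Hr]]] HG psi Hpsi.
    eapply lemB; [exact Hr| |exact HG|exact Hpsi].
    intros x Hx. apply in_app_iff in Hx as [Hx|Hx].
    + eapply inR_good2_l; eauto.
    + eapply inR_good2_r; eauto.
  - rewrite Hc. intros psi Hpsi. exists psi; split; [exact Hpsi|]. left. apply rt_refl.
Qed.
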